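(* Let $L=dN$ with integers $d\ge2$, $N\ge1$, and let $0<|z|<r_0$. Then the set $\mathcal L_z$ can be partitioned into $N$ subsets $\mathcal L_z^{(i)}$, $1\le i\le N$, each of $d-1$ elements, such that there is a map $M:\mathcal L_z\to\mathcal R_z$ with $M(u)=M(u')$ whenever $u,u'$ lie in the same subset $\mathcal L_z^{(i)}$, and $v=M(u)$ satisfies $v(v+1)^{d-1}=u(u+1)^{d-1}$.
   Context: $\rho=N/L=1/d$, $r_0=\rho^\rho(1-\rho)^{1-\rho}$. For $0<|z|<r_0$, the roots of $w^N(w+1)^{L-N}=z^L$ are simple and none has real part $-\rho$; $\mathcal L_z$ is the set of roots with real part $<-\rho$ and $\mathcal R_z$ the set with real part $>-\rho$. *)

(* Defs.v *)
From mathcomp Require Import all_boot all_order all_algebra.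
From mathcomp Require Import all_classical all_reals all_analysis.
From mathcomp Require Import complex.
Set Implicit Arguments. Unset Strict Implicit. Unset Printing Implicit Defensive.
Import Order.TTheory GRing.Theory Num.Theory.
Local Open Scope ring_scope.

Section Defs.
Variable R : realType.

Definition rho (N L : nat) : R := N%:R / L%:R.

Definition r0 (N L : nat) : R :=
  (rho N L) `^ (rho N L) * (1 - rho N L) `^ (1 - rho N L).

Definition is_root_eq (N L : nat) (z w : R[i]) : Prop :=
  w ^+ N * (w + 1) ^+ (L - N) = z ^+ L.

Definition Lz (N L : nat) (z w : R[i]) : Prop :=
  is_root_eq N L z w /\ (@complex.Re R w) < - rho N L.

Definition Rz (N L : nat) (z w : R[i]) : Prop :=
  is_root_eq N L z w /\ - rho N L < @complex.Re R w.
End Defs.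

(* Main.v *)
Require Import Defs.

From mathcomp Require Import all_boot all_order all_algebra.
From mathcomp Require Import all_classical all_reals all_analysis.
From mathcomp Require Import complex.
From mathcomp Require Import ring lra.
Import Order.TTheory GRing.Theory Num.Theory.
Local Open Scope ring_scope.

Section Aux.
Variable R : realType.
Local Notation F := (R[i]).
Lemma ReD (x y : F) : complex.Re (x + y) = complex.Re x + complex.Re y.
Proof. by case: x; case: y. Qed.

Lemma ReC (k : R) : complex.Re (k%:C)%C = k.
Proof. by []. Qed.

Lemma Re_sum (s : seq F) (h : F -> F) :
  complex.Re (\sum_(x <- s) h x) = \sum_(x <- s) complex.Re (h x).
Proof.
elim: s => [|x s IH]; first by rewrite !big_nil.
by rewrite !big_cons ReD IH.
Qed.

Lemma Re_le_norm (w : F) : ((complex.Re w)%:C)%C <= `|w| /\ ((- complex.Re w)%:C)%C <= `|w|.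
Proof.
rewrite normc_def !lecR; case: w => a b /=.
have H : `|a| <= Num.sqrt (a ^+ 2 + b ^+ 2).
  by rewrite -sqrtr_sqr ler_sqrt ?addr_ge0 ?sqr_ge0 // lerDl sqr_ge0.
split; apply: le_trans H; [exact: ler_norm | by rewrite -normrN ler_norm].
Qed.

Lemma Re_inv_pos (x : F) : 0 < complex.Re x -> 0 < complex.Re (x^-1).
Proof.
case: x => a b /= ha.
rewrite /GRing.inv /=.
apply: divr_gt0 => //; apply: ltr_wpDr; first exact: sqr_ge0.
by rewrite exprn_gt0.
Qed.

Local Notation PP s := (\prod_(r <- s) ('X - r%:P) : {poly F}).

Lemma PP_deriv_log (s : seq F) (a : F) : (forall r, r \in s -> a != r) ->
  (PP s)^`().[a] = (PP s).[a] * \sum_(r <- s) (a - r)^-1.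
Proof.
elim: s => [|x s IH] H; first by rewrite !big_nil derivC !hornerC mulr0.
rewrite !big_cons derivM derivXsubC mul1r hornerD hornerM IH; last first.
  by move=> r rs; apply: H; rewrite inE rs orbT.
have hx : a - x != 0 by rewrite subr_eq0; apply: H; rewrite mem_head.
rewrite hornerM !hornerXsubC mulrDr; congr (_ + _); last by rewrite mulrA.
by rewrite mulrAC mulfV // mul1r.
Qed.

Lemma PP_not_uniq (s : seq F) : ~~ uniq s ->
  exists2 r, r \in s & (PP s)^`().[r] = 0.
Proof.
elim: s => [//|x s IH] /=; rewrite negb_and negbK => /orP [xs | /IH [r rs hr]].
  exists x; first exact: mem_head.
  rewrite big_cons derivM derivXsubC mul1r hornerD hornerM !hornerXsubC subrr mul0r addr0.
  by apply/eqP; rewrite -/(root _ x) root_prod_XsubC.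
exists r; first by rewrite inE rs orbT.
rewrite big_cons derivM derivXsubC mul1r hornerD hornerM hr mulr0 addr0.
by apply/eqP; rewrite -/(root _ r) root_prod_XsubC.
Qed.


Variable n : nat.
Definition dd : R := (n.+2)%:R.
Definition aa : R := - dd^-1.
Definition BB : R := dd / (dd - 1).
Definition KK : R := (dd - 1) ^+ n.+1 / dd ^+ n.+2.
Definition ff (w : F) : F := w * (w + 1) ^+ n.+1.

Lemma dd_gt1 : 1 < dd.
Proof. by rewrite /dd ltr1n. Qed.
Lemma dd_gt0 : 0 < dd.
Proof. exact: lt_trans dd_gt1. Qed.
Lemma dd1_gt0 : 0 < dd - 1.
Proof. by rewrite subr_gt0 dd_gt1. Qed.

Lemma KK_eq : KK = dd^-1 * (1 - dd^-1) ^+ n.+1.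
Proof.
have h0 := dd_gt0; have h1 := dd1_gt0.
have -> : (1 - dd^-1) = (dd - 1) / dd by field; rewrite gt_eqF.
rewrite /KK expr_div_n [dd ^+ n.+2]exprS.
field; by rewrite ?expf_eq0 ?gt_eqF.
Qed.

Lemma KK_gt0 : 0 < KK.
Proof. by rewrite /KK divr_gt0 // exprn_gt0 // ?dd_gt0 ?dd1_gt0. Qed.

Lemma KK_BB : KK * ((dd - 1) * BB ^+ n.+2) = 1.
Proof.
have h0 := dd_gt0; have h1 := dd1_gt0.
rewrite /KK /BB expr_div_n.
rewrite [(dd - 1) ^+ n.+2]exprS.
field. by rewrite !expf_eq0 !gt_eqF.
Qed.


Lemma Re1 : complex.Re (1 : F) = 1. Proof. by []. Qed.

Lemma norm_left (w : F) : complex.Re w <= aa -> ((dd^-1)%:C)%C <= `|w|.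
Proof.
move=> h; apply: le_trans (Re_le_norm w).2.
by rewrite lecR /aa lerNr.
Qed.

Lemma norm_right (w : F) : aa <= complex.Re w -> ((1 - dd^-1)%:C)%C <= `|w + 1|.
Proof.
move=> h; apply: le_trans (Re_le_norm (w + 1)).1.
rewrite lecR ReD Re1; rewrite /aa in h. by rewrite [X in _ <= X]addrC lerD2l.
Qed.

Lemma KK_C : ((KK)%:C)%C = ((dd^-1)%:C)%C * ((1 - dd^-1)%:C)%C ^+ n.+1 :> F.
Proof. by rewrite KK_eq rmorphM rmorphXn. Qed.

Lemma line_lb (w : F) : complex.Re w = aa -> ((KK)%:C)%C <= `|ff w|.
Proof.
move=> h; rewrite KK_C /ff normrM normrX.
have h0 : 0 <= ((1 - dd^-1)%:C)%C :> F.
  by rewrite ler0c subr_ge0 invf_le1 ?dd_gt0 // ltW // dd_gt1.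
apply: ler_pM.
- by rewrite ler0c invr_ge0 ltW // dd_gt0.
- by rewrite exprn_ge0.
- by apply: norm_left; rewrite h.
- by apply: lerXn2r; rewrite ?nnegrE // ?normr_ge0 //; apply: norm_right; rewrite h.
Qed.


Lemma dd1E : dd - 1 = (n.+1)%:R.
Proof. by rewrite /dd -addn1 natrD addrK. Qed.

Lemma BB_inv : ((1 - dd^-1)%:C)%C^-1 = ((BB)%:C)%C :> F.
Proof.
rewrite -rmorphV /=; last first.
  by rewrite unitfE subr_eq0 eq_sym invr_eq1 gt_eqF // dd_gt1.
congr (_%:C)%C; rewrite /BB.
have h0 := dd_gt0; have h1 := dd1_gt0.
by field; rewrite !gt_eqF // subr_gt0 -(@invrK _ dd) invf_gt1 // invr_gt0.
Qed.

Lemma right_inv_bound (w : F) : aa < complex.Re w ->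
  w + 1 != 0 /\ `|(w + 1)^-1| <= ((BB)%:C)%C.
Proof.
move=> h; have := norm_right w (ltW h) => hn.
have hp : 0 < ((1 - dd^-1)%:C)%C :> F.
  by rewrite ltcR subr_gt0 invf_lt1 ?dd_gt0 // dd_gt1.
have hw : 0 < `|w + 1| := lt_le_trans hp hn.
split; first by rewrite -normr_gt0.
by rewrite normrV ?unitfE -?normr_gt0 // -BB_inv lef_pV2 ?posrE.
Qed.

Lemma right_unique (c a1 b1 : F) : `|c| < ((KK)%:C)%C ->
  ff a1 = c -> ff b1 = c -> aa < complex.Re a1 -> aa < complex.Re b1 -> a1 = b1.
Proof.
move=> hc ea eb ra rb.
have [ha hpa] := right_inv_bound a1 ra.
have [hb hpb] := right_inv_bound b1 rb.
set p := (a1 + 1)^-1 in hpa; set q := (b1 + 1)^-1 in hpb.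
have ea' : a1 = c * p ^+ n.+1.
  by rewrite -ea /ff /p exprVn mulrK // unitfE expf_neq0.
have eb' : b1 = c * q ^+ n.+1.
  by rewrite -eb /ff /q exprVn mulrK // unitfE expf_neq0.
have epq : p - q = (b1 - a1) * p * q.
  by rewrite /p /q; field; rewrite ha hb.
set S := \sum_(i < n.+1) p ^+ (n.+1.-1 - i) * q ^+ i.
have key : (a1 - b1) * (1 + c * p * q * S) = 0.
  have : a1 - b1 = c * ((p - q) * S) by rewrite {1}ea' {1}eb' -mulrBr subrXX.
  rewrite epq => e1.
  rewrite mulrDr mulr1 {1}e1.
  rewrite -opprB; ring.
have hB0 : 0 <= ((BB)%:C)%C :> F by apply: le_trans hpa.
have hS : `|S| <= ((BB)%:C)%C ^+ n *+ n.+1.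
  apply: le_trans (ler_norm_sum _ _ _) _.
  rewrite -[n.+1 in X in _ <= X]card_ord -sumr_const.
  apply: ler_sum => i _.
  rewrite normrM !normrX.
  have -> : ((BB)%:C)%C ^+ n = ((BB)%:C)%C ^+ (n.+1.-1 - i) * ((BB)%:C)%C ^+ i :> F.
    by rewrite -exprD subnK // -ltnS.
  apply: ler_pM; rewrite ?exprn_ge0 //; apply: lerXn2r; by rewrite ?nnegrE.
have hX : `|c * p * q * S| < 1.
  rewrite !normrM.
  have e1 : (1 : F) = ((KK)%:C)%C * ((BB)%:C)%C * ((BB)%:C)%C * (((BB)%:C)%C ^+ n *+ n.+1).
    have e0 : KK * BB * BB * (BB ^+ n *+ n.+1) = 1.
      by rewrite -KK_BB dd1E -mulr_natl !exprS; ring.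
    by rewrite -rmorphXn -rmorphMn -!rmorphM e0 rmorph1.
  rewrite e1.
  have hK : 0 < ((KK)%:C)%C :> F by rewrite ltcR KK_gt0.
  apply: le_lt_trans (_ : _ <= `|c| * ((BB)%:C)%C * ((BB)%:C)%C * (((BB)%:C)%C ^+ n *+ n.+1)) _.
    by rewrite -!mulrA; apply: ler_wpM2l => //; apply: ler_pM => //; apply: ler_pM.
  rewrite -!mulrA ltr_pM2r //.
  by rewrite !mulr_gt0 // ?pmulrn_lgt0 // ?exprn_gt0 // ltcR /BB divr_gt0 ?dd_gt0 ?dd1_gt0.
apply/eqP; rewrite -subr_eq0; apply/eqP.
move/eqP: key; rewrite mulf_eq0 => /orP [/eqP //|].
rewrite addrC addr_eq0 => /eqP ex; move: hX; rewrite ex normrN normr1 ltxx //.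
Qed.


Definition gg (c : F) : {poly F} := 'X * ('X - (-1)%:P) ^+ n.+1 - c%:P.

Lemma gg_horner (c w : F) : (gg c).[w] = ff w - c.
Proof. by rewrite /gg hornerD hornerN hornerC hornerM hornerX horner_exp hornerXsubC opprK. Qed.

Lemma gg_deriv (c w : F) :
  (gg c)^`().[w] = (w + 1) ^+ n * ((w + 1) + (n.+1)%:R * w).
Proof.
rewrite /gg derivB derivC subr0 derivM derivX deriv_exp derivXsubC mul1r.
rewrite hornerD mul1r hornerM hornerX hornerMn horner_exp hornerXsubC opprK /=.
by rewrite horner_exp hornerXsubC opprK exprS -mulr_natl; ring.
Qed.

Lemma gg_size (c : F) : size (gg c) = n.+3.
Proof.
have hm : ('X * ('X - (-1)%:P) ^+ n.+1 : {poly F}) \is monic.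
  by rewrite monicMl ?monicX // monic_exp // monicXsubC.
have hs : size ('X * ('X - (-1)%:P) ^+ n.+1 : {poly F}) = n.+3.
  rewrite size_monicM ?monicX ?size_polyX ?size_exp_XsubC //.
  by rewrite expf_neq0 // polyXsubC_eq0.
rewrite /gg size_addl hs // size_opp (leq_ltn_trans (size_polyC_leq1 _)) //.
Qed.

Lemma gg_monic (c : F) : gg c \is monic.
Proof.
have hs : size ('X * ('X - (-1)%:P) ^+ n.+1 : {poly F}) = n.+3.
  rewrite size_monicM ?monicX ?size_polyX ?size_exp_XsubC //.
  by rewrite expf_neq0 // polyXsubC_eq0.
apply/monicP; rewrite /gg lead_coefDl; last first.
  by rewrite size_opp hs (leq_ltn_trans (size_polyC_leq1 _)).
by apply/monicP; rewrite monicMl ?monicX // monic_exp // monicXsubC.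
Qed.

Definition rootsl (c : F) : seq F := sval (closed_field_poly_normal (gg c)).

Lemma gg_roots (c : F) : gg c = PP (rootsl c).
Proof.
rewrite /rootsl; case: (closed_field_poly_normal (gg c)) => rs /= {1}->.
by rewrite (monicP (gg_monic c)) scale1r.
Qed.

Lemma rootsl_size (c : F) : size (rootsl c) = n.+2.
Proof.
by have := gg_size c; rewrite gg_roots size_prod_XsubC => -[].
Qed.

Lemma rootsl_mem (c w : F) : (w \in rootsl c) = (ff w == c).
Proof. by rewrite -root_prod_XsubC -gg_roots rootE gg_horner subr_eq0. Qed.

Lemma aaC_eq : ((aa)%:C)%C = - ((n.+2)%:R)^-1 :> F.
Proof. by rewrite /aa /dd rmorphN rmorphV ?rmorph_nat // unitfE pnatr_eq0. Qed.

Lemma crit_eq (w : F) : (w + 1) + (n.+1)%:R * w = 0 -> w = ((aa)%:C)%C.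
Proof.
move=> h; rewrite aaC_eq.
have hn : (n.+2)%:R != 0 :> F by rewrite pnatr_eq0.
have : 1 + (n.+2)%:R * w = 0 by rewrite -h -[(n.+2)%:R]natr1 /=; ring.
move=> h2; apply: (mulfI hn); rewrite mulrN mulfV //.
by apply/eqP; rewrite -addr_eq0 addrC h2.
Qed.

Lemma crit_val : (((aa)%:C)%C + 1) + (n.+1)%:R * ((aa)%:C)%C = 0 :> F.
Proof.
rewrite aaC_eq.
have hn : (n.+2)%:R != 0 :> F by rewrite pnatr_eq0.
rewrite -[(n.+2)%:R]natr1 in hn *.
by field.
Qed.

Lemma ReaaC : complex.Re (((aa)%:C)%C : F) = aa.
Proof. by []. Qed.

Lemma not_line (c w : F) : `|c| < ((KK)%:C)%C -> w \in rootsl c -> complex.Re w != aa.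
Proof.
move=> hc; rewrite rootsl_mem => /eqP e; apply/negP => /eqP h.
by move: (line_lb w h); rewrite e => /(lt_le_trans hc); rewrite ltxx.
Qed.

Lemma rootsl_uniq (c : F) : c != 0 -> `|c| < ((KK)%:C)%C -> uniq (rootsl c).
Proof.
move=> c0 hc; apply: contraT => /PP_not_uniq [r rs].
rewrite -gg_roots gg_deriv => /eqP; rewrite mulf_eq0 => /orP [|/eqP h].
  rewrite expf_eq0 addr_eq0 => /andP [_ /eqP r1].
  move: rs; rewrite rootsl_mem /ff r1 addNr expr0n /= mulr0 eq_sym.
  by rewrite (negPf c0).
have := not_line _ _ hc rs; by rewrite (crit_eq _ h) ReaaC eqxx.
Qed.

Lemma sum_pos (s : seq F) (h : F -> R) : s != [::] ->
  (forall x, x \in s -> 0 < h x) -> 0 < \sum_(x <- s) h x.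
Proof.
elim: s => [//|x s IH] _ H; rewrite big_cons.
have hx : 0 < h x by apply: H; rewrite mem_head.
case: s IH H => [|y s] IH H; first by rewrite big_nil addr0.
apply: addr_gt0 => //; apply: IH => // z zs; by apply: H; rewrite in_cons zs orbT.
Qed.

Lemma exists_right (c : F) : c != 0 -> `|c| < ((KK)%:C)%C ->
  has (fun w => aa < complex.Re w) (rootsl c).
Proof.
move=> c0 hc; apply: contraT => /hasPn hn.
have hl : forall r, r \in rootsl c -> complex.Re r < aa.
  move=> r rs; have := hn r rs; have := not_line _ _ hc rs.
  by rewrite -leNgt lt_neqAle => -> ->.
have hne : forall r, r \in rootsl c -> ((aa)%:C)%C != r.
  move=> r rs; apply/negP => /eqP e; have := hl r rs; by rewrite -e ReaaC ltxx.
have := PP_deriv_log _ _ hne; rewrite -gg_roots gg_deriv crit_val mulr0.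
move/esym/eqP; rewrite mulf_eq0 => /orP [|/eqP hs].
  rewrite gg_horner subr_eq0 => /eqP e.
  by have := line_lb _ ReaaC; rewrite e => /(lt_le_trans hc); rewrite ltxx.
have : 0 < complex.Re (\sum_(r <- rootsl c) (((aa)%:C)%C - r)^-1).
  rewrite Re_sum; apply: sum_pos.
    by apply/eqP => e; have := rootsl_size c; rewrite e.
  move=> x xs; apply: Re_inv_pos.
  rewrite ReD ReaaC.
  have -> : complex.Re (- x) = - complex.Re x by case: x {xs}.
  by rewrite subr_gt0 hl.
by rewrite hs ltxx.
Qed.


Lemma size_right (c : F) : c != 0 -> `|c| < ((KK)%:C)%C ->
  size (seq.filter (fun w => aa < complex.Re w) (rootsl c)) = 1%N.
Proof.
move=> c0 hc.
have hu : uniq (seq.filter (fun w => aa < complex.Re w) (rootsl c)).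
  by rewrite filter_uniq // (rootsl_uniq _ c0 hc).
have heq : forall x y, x \in seq.filter (fun w => aa < complex.Re w) (rootsl c) ->
   y \in seq.filter (fun w => aa < complex.Re w) (rootsl c) -> x = y.
  move=> x y; rewrite !mem_filter => /andP [rx xs] /andP [ry ys].
  move: xs ys; rewrite !rootsl_mem => /eqP ex /eqP ey.
  exact: (right_unique _ _ _ hc ex ey rx ry).
have hh := exists_right _ c0 hc.
move: hu heq; rewrite has_filter in hh.
case: (seq.filter _ _) hh => [//|x [//|y t]] _ /= /andP [+ _] /(_ x y).
rewrite !inE !eqxx orbT => hxy /(_ isT isT) e.
by move: hxy; rewrite e eqxx.
Qed.

Lemma size_left (c : F) : c != 0 -> `|c| < ((KK)%:C)%C ->
  size (seq.filter (fun w => complex.Re w < aa) (rootsl c)) = n.+1.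
Proof.
move=> c0 hc.
have -> : seq.filter (fun w => complex.Re w < aa) (rootsl c) =
          seq.filter (predC (fun w => aa < complex.Re w)) (rootsl c).
  apply: eq_in_filter => w ws /=.
  have := not_line _ _ hc ws.
  by rewrite -leNgt lt_neqAle => ->.
have := count_predC (fun w => aa < complex.Re w) (rootsl c).
rewrite rootsl_size -!size_filter size_right //.
by rewrite add1n => -[].
Qed.


Lemma right_root (c : F) : c != 0 -> `|c| < ((KK)%:C)%C ->
  let v := head 0 (seq.filter (fun w => aa < complex.Re w) (rootsl c)) in
  v \in rootsl c /\ aa < complex.Re v.
Proof.
move=> c0 hc /=; have := size_right _ c0 hc.
have : forall x, x \in seq.filter (fun w => aa < complex.Re w) (rootsl c) ->
  x \in rootsl c /\ aa < complex.Re x.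
  by move=> x; rewrite mem_filter => /andP [].
case: (seq.filter _ _) => [//|x t] H _ /=; apply: H; exact: mem_head.
Qed.

End Aux.

Section Main.
Variable R : realType.
Local Notation F := (R[i]).

Lemma powR_pow_inv (x y : R) (k : nat) : 0 <= x -> (x `^ y) ^+ k = x `^ (y * k%:R).
Proof.
by move=> hx; rewrite powRrM powR_mulrn // powR_ge0.
Qed.

Lemma r0_pow (n N : nat) : (0 < N)%N ->
  (r0 R N (n.+2 * N)) ^+ n.+2 = KK R n.
Proof.
move=> hN.
have hr : rho R N (n.+2 * N) = (dd R n)^-1.
  rewrite /rho /dd natrM.
  have h1 : (N%:R : R) != 0 by rewrite pnatr_eq0 -lt0n.
  have h2 : ((n.+2)%:R : R) != 0 by rewrite pnatr_eq0.
  by field; rewrite h1 andbT -natrD pnatr_eq0.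
have g0 := dd_gt0 R n; have g1 := dd_gt1 R n.
rewrite /r0 hr exprMn !powR_pow_inv ?invr_ge0 ?ltW // ?subr_ge0 ?invf_le1 ?ltW //.
rewrite /dd mulVf ?pnatr_eq0 // powRr1 ?invr_ge0 ?ltW //.
have -> : (1 - (n.+2)%:R^-1) * (n.+2)%:R = (n.+1)%:R :> R.
  rewrite mulrBl mul1r mulVf ?pnatr_eq0 // -[(n.+2)%:R]natr1 /=. 
  by rewrite addrK.
rewrite powR_mulrn ?subr_ge0 ?invf_le1 ?ltr0n ?ler1n //.
  by rewrite KK_eq /dd.
by rewrite subr_gt0 invf_lt1.
Qed.

End Main.

Theorem lemma10p1 (R : realType) (d N : nat) (z : R[i]) :
  (2 <= d)%N -> (1 <= N)%N ->
  0 < `|z| -> `|z| < ((r0 R N (d * N))%:C)%C ->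
  exists (cls : R[i] -> 'I_N) (M : R[i] -> R[i]),
    (forall i : 'I_N, exists s : seq R[i],
        [/\ uniq s, size s = (d - 1)%N &
            forall u, (Lz N (d * N) z u /\ cls u = i) <-> u \in s]) /\
    (forall u, Lz N (d * N) z u -> Rz N (d * N) z (M u)) /\
    (forall u u', Lz N (d * N) z u -> Lz N (d * N) z u' ->
        cls u = cls u' -> M u = M u') /\
    (forall u, Lz N (d * N) z u ->
        M u * (M u + 1) ^+ (d - 1) = u * (u + 1) ^+ (d - 1)).
Proof.
case: d => [|[|n]] // _; case: N => [//|N] _ hz0 hz.
set NN := N.+1.
have hNN : (0 < NN)%N by [].
have z0 : z != 0 by rewrite -normr_gt0.
have hr : rho R NN (n.+2 * NN) = (dd R n)^-1.
  rewrite /rho /dd natrM.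
  have h1 : (NN%:R : R) != 0 by rewrite pnatr_eq0.
  by field; rewrite h1 andbT -natrD pnatr_eq0.
have hsub : (n.+2 - 1 = n.+1)%N by [].
rewrite hsub.
have hzd : `|z| ^+ n.+2 < ((KK R n)%:C)%C.
  rewrite -(r0_pow R n NN hNN) rmorphXn /=.
  by rewrite ltrXn2r.
have hroot : forall w, is_root_eq NN (n.+2 * NN) z w <-> (ff R n w) ^+ NN = z ^+ (n.+2 * NN).
  move=> w; rewrite /is_root_eq /ff.
  have -> : (n.+2 * NN - NN = n.+1 * NN)%N by rewrite mulSn addKn.
  by rewrite exprMn exprM.
pose P : {poly R[i]} := 'X^NN - (z ^+ (n.+2 * NN))%:P.
have Pm : P \is monic by rewrite monicXnsubC.
case: (closed_field_poly_normal P) => cs.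
rewrite (monicP Pm) scale1r => Pcs.
have cs_mem : forall c, (c \in cs) = (c ^+ NN == z ^+ (n.+2 * NN)).
  by move=> c; rewrite -root_prod_XsubC -Pcs rootE /P hornerD hornerN hornerC hornerXn subr_eq0.
have cs_size : size cs = NN.
  by have := size_XnsubC (z ^+ (n.+2 * NN)) hNN; rewrite -/P Pcs size_prod_XsubC => -[].
have zN0 : z ^+ (n.+2 * NN) != 0 by rewrite expf_neq0.
have cs_uniq : uniq cs.
  apply: contraT => /(PP_not_uniq R) [r rs]; rewrite -Pcs /P derivB derivC subr0 derivXn.
  rewrite hornerMn hornerXn => /eqP; rewrite mulrn_eq0 /= expf_eq0 => /andP [_ /eqP r0'].
  move: rs; rewrite cs_mem r0' expr0n /= eq_sym.
  by rewrite (negPf zN0).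
have cs_good : forall c, c \in cs -> c != 0 /\ `|c| < ((KK R n)%:C)%C.
  move=> c; rewrite cs_mem => /eqP e.
  have c0 : c != 0 by apply: contra_neq zN0 => c0; rewrite -e c0 expr0n.
  split => //.
  have : `|c| = `|z| ^+ n.+2.
    apply/eqP; rewrite -(@eqrXn2 _ NN) ?exprn_ge0 //.
    by rewrite -!normrX e exprM.
  by move=> ->.
pose cls := fun u : R[i] => (inord (index (ff R n u) cs) : 'I_N.+1).
pose M := fun u : R[i] => head 0 (seq.filter (fun w => aa R n < complex.Re w) (rootsl R n (ff R n u))).
have Lz_cs : forall u, Lz NN (n.+2 * NN) z u -> ff R n u \in cs /\ complex.Re u < aa R n.
  move=> u [/hroot e hu]; split; first by rewrite cs_mem e.
  by rewrite /aa -/(dd R n) -hr.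
have hM : forall u, Lz NN (n.+2 * NN) z u ->
   M u \in rootsl R n (ff R n u) /\ aa R n < complex.Re (M u).
  move=> u /Lz_cs [hu _]; have [c0 hc] := cs_good _ hu.
  exact: (right_root R n _ c0 hc).
exists cls, M; split; [|split; [|split]].
- move=> i; exists (seq.filter (fun w => complex.Re w < aa R n) (rootsl R n (cs`_i))).
  have ics : cs`_i \in cs by rewrite mem_nth // cs_size.
  have [c0 hc] := cs_good _ ics.
  split.
  + by rewrite filter_uniq // (rootsl_uniq R n _ c0 hc).
  + exact: (size_left R n _ c0 hc).
  move=> u; rewrite mem_filter (rootsl_mem R n); split.
  + move=> [hL hi]; have [hu hre] := Lz_cs u hL.
    rewrite hre /=.
    have hidx : (index (ff R n u) cs < NN)%N by rewrite -cs_size index_mem.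
    have : index (ff R n u) cs = i.
      by rewrite -hi /cls /= inordK.
    by move=> <-; rewrite nth_index.
  + move=> /andP [hre /eqP hu]; split.
      split; last by rewrite hr /aa /dd in hre *.
      by apply/hroot; apply/eqP; rewrite -cs_mem hu.
    rewrite /cls /= hu (index_uniq 0) ?cs_size //; exact: inord_val.
- move=> u hu; have [hm hre] := hM u hu; split.
    apply/hroot; move: hm; rewrite (rootsl_mem R n) => /eqP ->.
    by apply/hroot; case: hu.
  by rewrite hr.
- move=> u u' hu hu' e.
  have [h1 _] := Lz_cs u hu; have [h2 _] := Lz_cs u' hu'.
  have : index (ff R n u) cs = index (ff R n u') cs.
    have i1 : (index (ff R n u) cs < NN)%N by rewrite -cs_size index_mem.
    have i2 : (index (ff R n u') cs < NN)%N by rewrite -cs_size index_mem.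
    by have := congr1 (@nat_of_ord _) e; rewrite /cls /= !inordK.
  move=> ei; rewrite /M.
  have -> : ff R n u = ff R n u' by rewrite -(nth_index 0 h1) ei nth_index.
  by [].
- move=> u hu; have [hm _] := hM u hu.
  by move: hm; rewrite (rootsl_mem R n) => /eqP.
Qed.
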